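(* Let $A,B$ be systems of equal finite dimension $d$, each with observable $L=\sum_{n=0}^{d-1}n|n\rangle\langle n|$, and $L_{AB}=L\otimes\mathbb{I}+\mathbb{I}\otimes L$. Let $\rho_{AB}$ be a bipartite state with $[1,d-1]\cap\mathrm{modes}(\rho_{AB})=\emptyset$. Then there is no allowed operation that concentrates coherence, with respect to any coherence measure: for every allowed operation $\mathcal{E}$ on $AB$, the reduced states $\mathrm{tr}_B\mathcal{E}(\rho_{AB})$ and $\mathrm{tr}_A\mathcal{E}(\rho_{AB})$ are incoherent, i.e. commute with $L$.
   Context: For a bipartite operator $X$, its $j$th mode is $X^{(j)}:=\sum_c\Pi_{c+j}X\Pi_c$, with $\Pi_c$ the projector onto the eigenvalue-$c$ eigenspace of $L_{AB}$; $\mathrm{modes}(X):=\{j\in\mathbb{N}: X^{(j)}\neq0\}$. A state $\sigma$ of a system with observable $L$ is incoherent if $[\sigma,L]=0$. An allowed operation on $AB$ is a completely positive trace-preserving map $\mathcal{E}$ with $\mathcal{E}(e^{-iL_{AB}x}(\cdot)e^{iL_{AB}x})=e^{-iL_{AB}x}\mathcal{E}(\cdot)e^{iL_{AB}x}$ for all $x\in\mathbb{R}$. Any coherence measure considered vanishes on incoherent states. *)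

(* Defs.v *)
From HB Require Import structures.
From mathcomp Require Import all_boot all_order all_algebra.
From mathcomp Require Import reals trigo.
From mathcomp Require Import complex.

Unset Printing Implicit Defensive.

Import Order.TTheory GRing.Theory Num.Theory.
Local Open Scope ring_scope.

Section QDefs.
Context {R : realType}.
Local Notation C := (R[i]).

(* Operators on a finite-dimensional Hilbert space with orthonormal basis
   indexed by a finite type I, given by their matrix entries. *)
Definition op (I : finType) := I -> I -> C.

Definition op_mul {I : finType} (X Y : op I) : op I :=
  fun e f => \sum_(g : I) X e g * Y g f.
Definition op_add {I : finType} (X Y : op I) : op I := fun e f => X e f + Y e f.
Definition op_scale {I : finType} (a : C) (X : op I) : op I := fun e f => a * X e f.
Definition op_zero {I : finType} : op I := fun _ _ => 0.
Definition op_adj {I : finType} (X : op I) : op I := fun e f => conjc (X f e).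
Definition op_tr {I : finType} (X : op I) : C := \sum_(e : I) X e e.
Definition op_diag {I : finType} (g : I -> C) : op I :=
  fun e f => if e == f then g e else 0.

Definition psd {I : finType} (X : op I) : Prop :=
  forall v : I -> C, 0 <= \sum_(e : I) \sum_(f : I) conjc (v e) * X e f * v f.

Definition is_state {I : finType} (rho : op I) : Prop :=
  psd rho /\ op_tr rho = 1.

Definition AB (d : nat) := ('I_d * 'I_d)%type.

Definition Lsys (d : nat) : op 'I_d := op_diag (fun n : 'I_d => (n : nat)%:R).

(* L_AB = L (x) 1 + 1 (x) L, diagonal with eigenvalue a + b on |a,b> *)
Definition LAB (d : nat) : op (AB d) :=
  op_diag (fun e : AB d => (e.1 + e.2)%N%:R).

(* Pi_c : projector onto the eigenvalue-c eigenspace of L_AB (zero if c is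
   not an eigenvalue). *)
Definition Pi (d : nat) (c : nat) : op (AB d) :=
  op_diag (fun e : AB d => if (e.1 + e.2 == c)%N then 1 else 0).

(* j-th mode X^(j) = sum_c Pi_(c+j) X Pi_c ; the eigenvalues of L_AB are
   0, ..., 2d-2, so summing over c < 2d covers all of them. *)
Definition mode {d : nat} (j : nat) (X : op (AB d)) : op (AB d) :=
  \big[@op_add _ / @op_zero _]_(c < (2 * d)%N)
     op_mul (op_mul (Pi d (c + j)%N) X) (Pi d c).

Definition in_modes {d : nat} (X : op (AB d)) (j : nat) : Prop :=
  mode j X <> @op_zero (AB d).

Definition incoherent {d : nat} (sigma : op 'I_d) : Prop :=
  op_mul sigma (Lsys d) = op_mul (Lsys d) sigma.

Definition trB {d : nat} (X : op (AB d)) : op 'I_d :=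
  fun a a' => \sum_(b : 'I_d) X (a, b) (a', b).
Definition trA {d : nat} (X : op (AB d)) : op 'I_d :=
  fun b b' => \sum_(a : 'I_d) X (a, b) (a, b').

Definition lin_map {I : finType} (E : op I -> op I) : Prop :=
  forall (a : C) (X Y : op I),
    E (op_add (op_scale a X) Y) = op_add (op_scale a (E X)) (E Y).

(* (id_k (x) E) applied to an operator on C^k (x) H *)
Definition ampl {I : finType} {k : nat} (E : op I -> op I)
  (X : op (('I_k * I)%type)) : op (('I_k * I)%type) :=
  fun e f => E (fun x y => X (e.1, x) (f.1, y)) e.2 f.2.

Definition completely_positive {I : finType} (E : op I -> op I) : Prop :=
  forall (k : nat) (X : op (('I_k * I)%type)), psd X -> psd (ampl E X).

Definition trace_preserving {I : finType} (E : op I -> op I) : Prop :=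
  forall X : op I, op_tr (E X) = op_tr X.

Definition cptp {I : finType} (E : op I -> op I) : Prop :=
  [/\ lin_map E, completely_positive E & trace_preserving E].

(* e^{-i L_AB x}, diagonal with entries exp(-i (a+b) x) *)
Definition Uevol (d : nat) (x : R) : op (AB d) :=
  op_diag (fun e : AB d =>
    let t := ((e.1 + e.2)%N%:R * x) in Complex (cos t) (- sin t)).

Definition covariant {d : nat} (E : op (AB d) -> op (AB d)) : Prop :=
  forall (x : R) (X : op (AB d)),
    E (op_mul (op_mul (Uevol d x) X) (op_adj (Uevol d x)))
    = op_mul (op_mul (Uevol d x) (E X)) (op_adj (Uevol d x)).

Definition allowed_op {d : nat} (E : op (AB d) -> op (AB d)) : Prop :=
  cptp E /\ covariant E.

End QDefs.
Arguments op R I : clear implicits.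

(* Main.v *)
Require Import Defs.
From HB Require Import structures.
From mathcomp Require Import all_boot all_order all_algebra.
From mathcomp Require Import reals trigo.
From mathcomp Require Import complex.
From mathcomp Require Import ring lra zify.
From Stdlib Require Import FunctionalExtensionality Classical.
Import Order.TTheory GRing.Theory Num.Theory.
Local Open Scope ring_scope.
Local Open Scope complex_scope.
Section S.
Variable R : realType.
Local Notation C := (R[i]).

Lemma sum_pick2 (I : finType) (i j : I) (a b : C) (F : I -> C) : i != j ->
  \sum_e ((if e == i then a else 0) + (if e == j then b else 0)) * F e = a * F i + b * F j.
Proof.
move=> hij; rewrite (bigD1 i) //= (bigD1 j) /=; last by rewrite eq_sym.
rewrite !eqxx (negbTE hij) eq_sym (negbTE hij) big1 ?addr0 ?add0r //.
by move=> e /andP [/negbTE -> /negbTE ->]; rewrite addr0 mul0r.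
Qed.

Definition dl2 {I : finType} (i j : I) (c : C) : I -> C :=
  fun e => (if e == i then 1 else 0) + (if e == j then c else 0).
Definition dl1 {I : finType} (i : I) : I -> C := fun e => if e == i then 1 else 0.
Lemma quad2 (I : finType) (X : op R I) i j (c : C) : i != j ->
  let v := dl2 i j c in
  \sum_e \sum_f conjc (v e) * X e f * v f =
  (X i i + c * X i j) + conjc c * (X j i + c * X j j).
Proof.
move=> hij v; rewrite /v /dl2.
have cv : forall e, conjc (v e) = (if e == i then 1 else 0) + (if e == j then conjc c else 0).
  by move=> e; rewrite /v rmorphD /=; case: (e == i); case: (e == j); rewrite ?conjc1 ?conjc0.
under eq_bigr => e _.
  under eq_bigr => f _ do rewrite [_ * v f]mulrC.
  rewrite sum_pick2 // mul1r mulrCA -mulrDr cv.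
  over.
by rewrite sum_pick2 // mul1r.
Qed.

Lemma quad1 (I : finType) (X : op R I) i :
  let v := dl1 i in
  \sum_e \sum_f conjc (v e) * X e f * v f = X i i.
Proof.
move=> v; rewrite /v /dl1.
rewrite (bigD1 i) //=.
rewrite [X in _ + X = _]big1 ?addr0; last first.
  move=> e /negbTE he; apply: big1 => f _; by rewrite he conjc0 !mul0r.
rewrite (bigD1 i) //=.
rewrite [X in _ + X = _]big1 ?addr0; last first.
  by move=> f /negbTE hf; rewrite hf mulr0.
by rewrite eqxx conjc1 mul1r mulr1.
Qed.

Lemma psd_herm (I : finType) (X : op R I) : psd X -> forall e f, X f e = conjc (X e f).
Proof.
move=> H e f.
case: (eqVneq e f) => [<-|hef].
  have := ger0_Im (H (dl1 e)); rewrite quad1; case: (X e e) => a b /= ->.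
  by apply/eqP; rewrite eq_complex /= oppr0 !eqxx.
have h1 := ger0_Im (H (dl2 e f 1)); rewrite quad2 // in h1.
have h2 := ger0_Im (H (dl2 e f 'i)); rewrite quad2 // in h2.
have h3 := ger0_Im (H (dl1 e)); rewrite quad1 in h3.
have h4 := ger0_Im (H (dl1 f)); rewrite quad1 in h4.
move: h1 h2 h3 h4.
case: (X e e) => [a1 b1]; case: (X e f) => [a2 b2]; case: (X f e) => [a3 b3]; case: (X f f) => [a4 b4].
move=> /= h1 h2 h3 h4.
apply/eqP; rewrite eq_complex /=; apply/andP; split; apply/eqP.

all: lra.
Qed.

Definition g (t : R) : R[i] := Complex (cos t) (- sin t).
Lemma gB a b : g a * conjc (g b) = g (a - b).
Proof. rewrite /g /= cosB sinB. apply/eqP; rewrite eq_complex /=. apply/andP; split; apply/eqP.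
- rewrite opprK; ring.
- ring. Qed.
Lemma g_neq0 a : g a != 0.
Proof. apply/negP=> /eqP H. have := cos2Dsin2 a. rewrite /g in H. case: H => -> /eqP. rewrite oppr_eq0 => /eqP ->. by rewrite expr0n /= addr0 => /eqP; rewrite eq_sym oner_eq0. Qed.
Lemma gDpi t : g (t + pi) = - g t.
Proof. rewrite /g cosDpi sinDpi. apply/eqP; rewrite eq_complex /= !eqxx //. Qed.

Section Ops.
Variable I : finType.
Lemma bigop_apply n (F : 'I_n -> op R I) e f :
  (\big[@op_add _ _/@op_zero _ _]_(i < n) F i) e f = \sum_(i < n) F i e f.
Proof.
elim: n F => [|n IH] F; first by rewrite !big_ord0.
rewrite big_ord_recl [RHS]big_ord_recl /= -(IH (fun i => F (lift ord0 i))).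
by [].
Qed.

Lemma mul_diag_l (h : I -> C) (X : op R I) e f : op_mul (op_diag h) X e f = h e * X e f.
Proof.
rewrite /op_mul (bigD1 e) //= /op_diag eqxx big1 ?addr0 //.
by move=> k; rewrite eq_sym => /negbTE ->; rewrite mul0r.
Qed.

Lemma mul_diag_r (h : I -> C) (X : op R I) e f : op_mul X (op_diag h) e f = X e f * h f.
Proof.
rewrite /op_mul (bigD1 f) //= /op_diag eqxx big1 ?addr0 //.
by move=> k /negbTE ->; rewrite mulr0.
Qed.

Lemma mul_adiag_r (h : I -> C) (X : op R I) e f :
  op_mul X (op_adj (op_diag h)) e f = X e f * conjc (h f).
Proof.
rewrite /op_mul (bigD1 f) //= /op_adj /op_diag eqxx big1 ?addr0 //.
by move=> k; rewrite eq_sym => /negbTE ->; rewrite conjc0 mulr0.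
Qed.

Variable E : op R I -> op R I.
Hypothesis HE : lin_map E.

Lemma E_zero : E op_zero = op_zero.
Proof.
have := HE (-1) op_zero op_zero.
have -> : op_add (op_scale (-1) op_zero) op_zero = @op_zero R I.
  by apply: functional_extensionality => e; apply: functional_extensionality => f;
     rewrite /op_add /op_scale /op_zero mulr0 addr0.
move=> H; apply: functional_extensionality => e; apply: functional_extensionality => f.
have := congr1 (fun Z => Z e f) H; rewrite /op_add /op_scale /= mulN1r addNr.
by [].
Qed.

Lemma opadd0 (X : op R I) : op_add X op_zero = X.
Proof. by apply: functional_extensionality => e; apply: functional_extensionality => f; rewrite /op_add /op_zero addr0. Qed.
Lemma opscale1 (X : op R I) : op_scale 1 X = X.
Proof. by apply: functional_extensionality => e; apply: functional_extensionality => f; rewrite /op_scale mul1r. Qed.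

Lemma E_scale a X : E (op_scale a X) = op_scale a (E X).
Proof. by have := HE a X op_zero; rewrite !E_zero !opadd0. Qed.

Lemma E_add X Y : E (op_add X Y) = op_add (E X) (E Y).
Proof. by have := HE 1 X Y; rewrite !opscale1. Qed.

Lemma E_big n (F : 'I_n -> op R I) :
  E (\big[@op_add _ _/@op_zero _ _]_(i < n) F i) = \big[@op_add _ _/@op_zero _ _]_(i < n) E (F i).
Proof.
elim: n F => [|n IH] F; first by rewrite !big_ord0 E_zero.
by rewrite big_ord_recl [RHS]big_ord_recl /= E_add IH.
Qed.
End Ops.

Section Main.
Variable d : nat.
Local Notation lev e := (e.1 + e.2)%N.

Lemma lev_lt (e : AB d) : (lev e < 2 * d)%N.
Proof. have := ltn_ord e.1; have := ltn_ord e.2; lia. Qed.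

Lemma Uconj x (X : op R (AB d)) e f :
  op_mul (op_mul (Uevol d x) X) (op_adj (Uevol d x)) e f
  = g ((lev e)%:R * x) * X e f * conjc (g ((lev f)%:R * x)).
Proof. by rewrite /Uevol mul_adiag_r mul_diag_l. Qed.

Lemma support (E : op R (AB d) -> op R (AB d)) (Hl : lin_map E) (Hc : covariant E)
  (c c' : nat) (Y : op R (AB d)) :
  (forall e f : AB d, (lev e + c' != lev f + c)%N -> Y e f = 0) ->
  forall e f : AB d, (lev e + c' != lev f + c)%N -> E Y e f = 0.
Proof.
move=> HY e f hne.
pose δ : R := (lev e + c')%N%:R - (lev f + c)%N%:R.
have hδ : δ != 0 by rewrite subr_eq0 eqr_nat.
pose x := pi / δ.
pose t := (c%:R - c'%:R) * x.
have H1 : op_mul (op_mul (Uevol d x) Y) (op_adj (Uevol d x)) = op_scale (g t) Y.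
  apply: functional_extensionality => e0; apply: functional_extensionality => f0.
  rewrite Uconj /op_scale.
  case: (eqVneq (lev e0 + c') (lev f0 + c))%N => h; last by rewrite HY // !mulr0 mul0r.
  rewrite mulrAC gB; congr (g _ * _).
  rewrite /t -mulrBl; congr (_ * x).
  have := congr1 (fun n => n%:R : R) h; rewrite /= !natrD => h'.
  lra.
have := congr1 (fun Z => Z e f) (Hc x Y).
rewrite H1 (@E_scale _ _ Hl) Uconj /op_scale mulrAC gB.
have -> : (lev e)%:R * x - (lev f)%:R * x = t + pi.
  have Hp : pi = δ * x by rewrite /x mulrC divfK.
  by rewrite Hp /t /δ !natrD; ring.
rewrite gDpi mulNr => /eqP; rewrite -addr_eq0 -mulr2n mulrn_eq0 /= mulf_eq0.
by rewrite (negbTE (g_neq0 _)) /= => /eqP.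
Qed.


Lemma mode_entry (X : op R (AB d)) j (e f : AB d) :
  lev e = (lev f + j)%N -> mode j X e f = X e f.
Proof.
move=> hef.
rewrite /mode bigop_apply (bigD1 (Ordinal (lev_lt f))) //= /Pi mul_diag_r mul_diag_l /=.
rewrite hef !eqxx mul1r mulr1 big1 ?addr0 //.
move=> c hc; rewrite mul_diag_r mul_diag_l.
have -> : (f.1 + f.2 == c)%N = false.
  apply/negbTE; apply: contra hc => /eqP h; apply/eqP/val_inj => /=; by rewrite h.
by rewrite mulr0.
Qed.

Variable rho : op R (AB d).
Hypothesis Hst : is_state rho.
Hypothesis Hm : forall j : nat, (1 <= j <= d.-1)%N -> ~ in_modes rho j.

Lemma rho_zero (e f : AB d) k : (1 <= k <= d.-1)%N ->
  (lev e = lev f + k \/ lev f = lev e + k)%N -> rho e f = 0.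
Proof.
move=> hk.
have Hz : forall e f : AB d, lev e = (lev f + k)%N -> rho e f = 0.
  move=> e0 f0 h.
  have H0 : mode k rho = op_zero by apply: NNPP; apply: Hm.
  by have := congr1 (fun Z => Z e0 f0) H0; rewrite /= mode_entry.
case=> h; first exact: Hz.
by rewrite (@psd_herm _ _ (proj1 Hst)) (Hz _ _ h) conjc0.
Qed.

Definition Yb (c c' : nat) : op R (AB d) :=
  fun e f => if (lev e == c) && (lev f == c') then rho e f else 0.

Lemma decomp : rho = \big[@op_add _ _/@op_zero _ _]_(c < 2 * d)
                       \big[@op_add _ _/@op_zero _ _]_(c' < 2 * d) Yb c c'.
Proof.
apply: functional_extensionality => e; apply: functional_extensionality => f.
rewrite bigop_apply; under eq_bigr do rewrite bigop_apply.
rewrite (bigD1 (Ordinal (lev_lt e))) //= [X in _ + X]big1 ?addr0; last first.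
  move=> c hc; apply: big1 => c' _; rewrite /Yb.
  have -> : (lev e == c) = false.
    apply/negbTE; apply: contra hc => /eqP h; apply/eqP/val_inj => /=; by rewrite h.
  by [].
rewrite (bigD1 (Ordinal (lev_lt f))) //= [X in _ + X]big1 ?addr0; last first.
  move=> c hc; rewrite /Yb.
  have -> : (lev f == c) = false.
    apply/negbTE; apply: contra hc => /eqP h; apply/eqP/val_inj => /=; by rewrite h.
  by rewrite andbF.
by rewrite /Yb !eqxx.
Qed.

Lemma Ezero (E : op R (AB d) -> op R (AB d)) : allowed_op E ->
  forall (e f : AB d) k, (1 <= k <= d.-1)%N ->
  (lev e = lev f + k \/ lev f = lev e + k)%N -> E rho e f = 0.
Proof.
move=> [[Hl _ _] Hc] e f k hk hef.
rewrite decomp (@E_big _ _ Hl) bigop_apply big1 // => c _.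
rewrite (@E_big _ _ Hl) bigop_apply big1 // => c' _.
case: (eqVneq (lev e + c') (lev f + c))%N => h.
  have -> : Yb c c' = op_zero.
    apply: functional_extensionality => e0; apply: functional_extensionality => f0.
    rewrite /Yb; case: ifP => // /andP [/eqP h1 /eqP h2].
    apply: (@rho_zero _ _ k hk); rewrite -h1 -h2 in h; move: h hef; clear; move: (e.1 + e.2)%N (f.1 + f.2)%N (e0.1 + e0.2)%N (f0.1 + f0.2)%N => x y z w; lia.
  by rewrite (@E_zero _ _ Hl).
apply: (@support E Hl Hc c c' (Yb c c') _ e f h) => e0 f0 hn; rewrite /Yb; case: ifP => // /andP [/eqP h1 /eqP h2].
by rewrite h1 h2 addnC eqxx in hn.
Qed.

End Main.
End S.

Local Close Scope complex_scope.

Theorem mainTheorem6 (R : realType) (d : nat) (rho : op R (AB d)) :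
  is_state rho ->
  (forall j : nat, (1 <= j <= d.-1)%N -> ~ in_modes rho j) ->
  forall E : op R (AB d) -> op R (AB d),
    allowed_op E ->
    incoherent (trB (E rho)) /\ incoherent (trA (E rho)).
Proof.
move=> Hst Hm E HE.
have key : forall (a a' : 'I_d), a != a' -> forall b : 'I_d,
    E rho (a, b) (a', b) = 0 /\ E rho (b, a) (b, a') = 0.
  move=> a a' haa b.
  have hne : (a : nat) <> a' by move=> h; move/eqP: haa; apply; apply: val_inj.
  have := ltn_ord a; have := ltn_ord a'.
  case: (ltngtP a a') => h ha' ha; last by [].
  - split; apply: (@Ezero R d rho Hst Hm E HE _ _ (a' - a)%N) => /=; lia.
  - split; apply: (@Ezero R d rho Hst Hm E HE _ _ (a - a')%N) => /=; lia.
split; rewrite /incoherent;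
  apply: functional_extensionality => a; apply: functional_extensionality => a';
  rewrite /Lsys mul_diag_r mul_diag_l;
  (case: (eqVneq a a') => [->|h]; first by rewrite mulrC).
- have -> : trB (E rho) a a' = 0.
    by rewrite /trB big1 // => b _; case: (key a a' h b).
  by rewrite mulr0 mul0r.
- have -> : trA (E rho) a a' = 0.
    by rewrite /trA big1 // => b _; case: (key a a' h b).
  by rewrite mulr0 mul0r.
Qed.
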